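(* Let $I\subseteq R$ be a good ideal. Then for every integer $t\ge0$, $$I_{t+1,0,\dots,0}=(I_{t,0,\dots,0}\cdot I):\langle\mu_1\rangle.$$
   Context: Let $\mathbb K$ be a field, $R=\mathbb K[x_1,\dots,x_n]$, $\mathfrak m=\langle x_1,\dots,x_n\rangle$, $\mathbb N=\{0,1,2,\dots\}$. A monomial $x_1^{\alpha_1}\cdots x_n^{\alpha_n}$ is identified with the point $(\alpha_1,\dots,\alpha_n)\in\mathbb N^n$. For a monomial ideal $I$, $G(I)$ denotes its (unique) minimal monomial generating set. If $I$ is an $\mathfrak m$-primary monomial ideal, then for each $i$ there is a unique $d_i\ge1$ with $x_i^{d_i}\in G(I)$; write $\mu_i=x_i^{d_i}$. For $(a_1,\dots,a_n)\in\mathbb N^n$ the box associated to $I$ is $B_{a_1,\dots,a_n}=([a_1d_1,(a_1+1)d_1]\times\cdots\times[a_nd_n,(a_n+1)d_n])\cap\mathbb N^n$; a monomial belongs to a box if its exponent vector does. An $\mathfrak m$-primary monomial ideal $I$ is called good if for every integer $l\ge1$, every element of $G(I^l)$ belongs to some box $B_{a_1,\dots,a_n}$ with $a_1+\dots+a_n=l-1$. For a good ideal $I$ and $a=(a_1,\dots,a_n)\in\mathbb N^n$, with $l=a_1+\dots+a_n+1$, define $I_{a_1,\dots,a_n}=\left\langle \frac{m}{\mu_1^{a_1}\cdots\mu_n^{a_n}} : m\in B_{a_1,\dots,a_n}\cap G(I^l)\right\rangle$. *)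

(* Defs.v *)
(* Monomial ideals of K[x_1,...,x_n] are encoded
   combinatorially: a monomial is its exponent vector in N^n, and a monomial
   ideal is identified with the (upward closed) set of exponent vectors of the
   monomials it contains.  Variable x_1 is index ord0 of 'I_n. *)
From mathcomp Require Import all_boot.
Set Implicit Arguments.
Unset Strict Implicit.
Unset Printing Implicit Defensive.

Definition expv (n : nat) := 'I_n -> nat.

Definition monset (n : nat) := expv n -> Prop.

Definition mdiv n (a b : expv n) : Prop := forall i, a i <= b i.

Definition mmul n (a b : expv n) : expv n := fun i => a i + b i.

Definition xpow n (i : 'I_n) (k : nat) : expv n :=
  fun j => if j == i then k else 0.

Definition mone n : expv n := fun _ => 0.

Definition is_monideal n (I : monset n) : Prop :=
  forall a b, I a -> mdiv a b -> I b.

Definition mgen n (S : monset n) : monset n :=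
  fun b => exists2 a, S a & mdiv a b.

Definition minGen n (I : monset n) : monset n :=
  fun a => I a /\ forall b, I b -> mdiv b a -> forall i, b i = a i.

Definition mprod n (J K : monset n) : monset n :=
  fun b => exists a c, [/\ J a, K c & mdiv (mmul a c) b].

Fixpoint mpow n (I : monset n) (l : nat) : monset n :=
  match l with
  | 0 => fun _ => True
  | l'.+1 => mprod (mpow I l') I
  end.

Definition mcolon n (J : monset n) (m : expv n) : monset n :=
  fun b => J (mmul b m).

Definition msame n (J K : monset n) : Prop := forall b, J b <-> K b.

(* m-primary monomial ideal, with d i the exponent such that x_i^(d i) is in
   G(I) (it is unique, so we take it as a parameter constrained by this) *)
Definition m_primary n (I : monset n) (d : 'I_n -> nat) : Prop :=
  [/\ is_monideal I, ~ I (@mone n), forall i, 1 <= d i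
    & forall i, minGen I (xpow i (d i))].

Definition inBox n (d : 'I_n -> nat) (a : expv n) (m : expv n) : Prop :=
  forall i, a i * d i <= m i <= (a i).+1 * d i.

Definition esum n (a : expv n) : nat := \sum_(i < n) a i.

Definition good n (I : monset n) (d : 'I_n -> nat) : Prop :=
  m_primary I d /\
  forall l, 1 <= l -> forall m, minGen (mpow I l) m ->
    exists a : expv n, esum a = l.-1 /\ inBox d a m.

Definition Ia n (I : monset n) (d : 'I_n -> nat) (a : expv n) : monset n :=
  mgen (fun q => exists m, [/\ inBox d a m, minGen (mpow I (esum a).+1) m
                            & forall i, q i = m i - a i * d i]).

Definition t0 n (t : nat) : expv n.+1 := xpow ord0 t.

(* Main.v *)
Require Import Defs.
From mathcomp Require Import all_boot.
From mathcomp Require Import zify.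
From Stdlib Require Import Classical.

Section Helpers.
Variable n : nat.
Implicit Types (a b c : expv n) (I J : monset n).

Lemma mdiv_refl a : mdiv a a.
Proof. by move=> i. Qed.

Lemma mdiv_trans a b c : mdiv a b -> mdiv b c -> mdiv a c.
Proof. move=> h1 h2 i; exact: leq_trans (h1 i) (h2 i). Qed.

Lemma mpow_up I l : is_monideal (mpow I l).
Proof.
case: l => [//|l] a b [x [y [h1 h2 h3]]] hab.
exists x, y; split => //; exact: mdiv_trans h3 hab.
Qed.

Lemma mpow_mul I k l a c :
  mpow I k a -> mpow I l c -> mpow I (k + l) (mmul a c).
Proof.
elim: l c => [|l IH] c ha hc.
  rewrite addn0; apply: mpow_up ha _ => i; rewrite /mmul; lia.
rewrite addnS; case: hc => [c1 [c2 [h1 h2 h3]]].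
exists (mmul a c1), c2; split => //; first exact: IH.
move=> i; have := h3 i; rewrite /mmul; lia.
Qed.

Arguments mpow_up {I l a b}.
Arguments mpow_mul {I k l a c}.

Definition sc (k : nat) a : expv n := fun i => k * a i.

Lemma mpow_sc I l k a : mpow I l a -> mpow I (k * l) (sc k a).
Proof.
move=> ha; elim: k => [//|k IH].
rewrite mulSn; apply: (mpow_up (mpow_mul ha IH)) => i.
rewrite /mmul /sc mulSn; lia.
Qed.

Lemma esum_lt a b : mdiv a b -> forall i, a i < b i -> esum a < esum b.
Proof.
move=> hab i hi; rewrite /esum (bigD1 i) //= [X in _ < X](bigD1 i) //=.
rewrite -addSn leq_add //; apply: leq_sum => j _; exact: hab.
Qed.

Arguments esum_lt {a b}.

Lemma min_exists (P : monset n) b : P b -> exists2 m, minGen P m & mdiv m b.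
Proof.
move: {2}(esum b) (leqnn (esum b)) => k; elim: k b => [|k IH] b hk hb.
  exists b; last exact: mdiv_refl.
  split => // b' hb' hdiv i; apply/eqP; rewrite eqn_leq hdiv /=.
  case: (leqP (b i) (b' i)) => // lt.
  by have := esum_lt hdiv i lt; lia.
case: (classic (minGen P b)) => hmin.
  by exists b => //; exact: mdiv_refl.
have [b' [hb' [hd hne]]] : exists b', P b' /\ mdiv b' b /\ exists i, b' i < b i.
  apply: NNPP => hno; apply: hmin; split => // b' hb' hdiv i.
  apply/eqP; rewrite eqn_leq hdiv /=; rewrite leqNgt; apply/negP => lt.
  by apply: hno; exists b'; split => //; split => //; exists i.
case: hne => i hi.
have [m hm hmb'] := IH b' (leq_trans (esum_lt hd i hi) hk) hb'.
by exists m => //; exact: mdiv_trans hmb' hd.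
Qed.

End Helpers.

Lemma t0E n k (i : 'I_n.+1) : @t0 n k i = if i == ord0 then k else 0.
Proof. by []. Qed.

Lemma xpowE n (j i : 'I_n) k : xpow j k i = if i == j then k else 0.
Proof. by []. Qed.

Lemma esum1 n (c : expv n.+1) :
  (forall i, i != ord0 -> c i = 0) -> esum c = c ord0.
Proof.
move=> h; rewrite /esum (bigD1 ord0) //= big1 ?addn0 //.
Qed.

Lemma esum2 n (c : expv n.+1) (j : 'I_n.+1) : j != ord0 ->
  (forall i, i != ord0 -> i != j -> c i = 0) -> esum c = c ord0 + c j.
Proof.
move=> hj h; rewrite /esum (bigD1 ord0) //= (bigD1 j) /=; last by rewrite hj.
rewrite big1 ?addn0 // => i /andP[h1 h2]; exact: h.
Qed.

Lemma esum_t0 n k : esum (@t0 n k) = k.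
Proof. by rewrite esum1 // => i hi; rewrite t0E (negbTE hi). Qed.

Section Main.
Variables (n : nat) (I : monset n.+1) (d : 'I_n.+1 -> nat).
Hypothesis hg : good I d.

Let d0 := d ord0.

Lemma d_pos i : 1 <= d i.
Proof. by case: hg => [[_ _ h _] _]. Qed.

Lemma I_xpow i : I (xpow i (d i)).
Proof. by case: hg => [[_ _ _ h] _]; case: (h i). Qed.

Definition pm (s : nat) : expv n.+1 := fun i => if i == ord0 then s * d0 else 0.

Lemma pm_in s : mpow I s (pm s).
Proof.
elim: s => [//|s IH]; exists (pm s), (xpow ord0 (d ord0)); split => //.
  exact: I_xpow.
move=> i; rewrite /mmul /pm xpowE; case: (i == ord0) => //.
rewrite mulSn /d0; lia.
Qed.

Lemma pm_bound l (p : expv n.+1) : minGen (mpow I l) p -> p ord0 <= l * d0.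
Proof.
move=> [hp hmin]; case: (leqP (p ord0) (l * d0)) => // lt.
have := hmin (pm l) (pm_in l).
have hd : mdiv (pm l) p.
  move=> i; rewrite /pm; case: eqP => [->|_] //; exact: ltnW.
move=> /(_ hd ord0); rewrite /pm eqxx => e; lia.
Qed.

Definition V (s : nat) (j : 'I_n.+1) : expv n.+1 :=
  fun i => if i == ord0 then s * d0 else if i == j then d j else 0.

Lemma V_in s j : j != ord0 -> mpow I s.+1 (V s j).
Proof.
move=> hj; exists (pm s), (xpow j (d j)); split.
- exact: pm_in.
- exact: I_xpow.
- move=> i; rewrite /mmul /pm /V xpowE.
  have [->|hi] := eqVneq i ord0.
    by rewrite eq_sym (negbTE hj) addn0.
  by rewrite add0n.
Qed.

Lemma V_eq s j (b : expv n.+1) : j != ord0 -> mpow I s.+1 b -> mdiv b (V s j) ->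
  b ord0 = s * d0 /\ b j = d j.
Proof.
move=> hj hb hbV.
have hb0 : b ord0 <= s * d0 by have := hbV ord0; rewrite /V eqxx.
have hbj : b j <= d j by have := hbV j; rewrite /V (negbTE hj) eqxx.
have hbo : forall i, i != ord0 -> i != j -> b i = 0.
  move=> i h1 h2; have := hbV i; rewrite /V (negbTE h1) (negbTE h2); lia.
set N := 2 * d0 * d j.
have hd0 := d_pos ord0; have hdj := d_pos j.
have hN := @mpow_sc _ I _ N _ hb.
have [m hm hmN] := @min_exists _ _ _ hN.
have hl : 1 <= N * s.+1 by rewrite /N /d0; nia.
case: hg => _ /(_ _ hl m hm) [c [hc hbox]].
have hco : forall i, i != ord0 -> i != j -> c i = 0.
  move=> i h1 h2; have := hbox i; have := hmN i; rewrite /sc hbo // muln0.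
  have := d_pos i; nia.
rewrite (@esum2 _ _ _ hj hco) in hc.
have h0 : c ord0 <= 2 * d j * b ord0.
  have := hbox ord0; have := hmN ord0; rewrite /sc /N /d0 => h1 /andP[h2 _].
  rewrite -(@leq_pmul2r (d ord0)) //; nia.
have h1 : c j <= 2 * d0 * b j.
  have := hbox j; have := hmN j; rewrite /sc /N /d0 => h1 /andP[h2 _].
  rewrite -(@leq_pmul2r (d j)) //; nia.
move: hc; rewrite /N /d0 in h1 hb0 * => hc.
split.
  apply/eqP; rewrite eqn_leq hb0 /=; rewrite leqNgt; apply/negP => lt.
  have : 2 * d j * b ord0 <= 2 * d j * (s * d ord0) - 2 * d j by nia.
  nia.
apply/eqP; rewrite eqn_leq hbj /=; rewrite leqNgt; apply/negP => lt.
have : 2 * d ord0 * b j <= 2 * d ord0 * d j - 2 * d ord0 by nia.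
nia.
Qed.


Lemma boxC s U : mpow I s.+1 U -> s * d ord0 <= U ord0 ->
  exists m, [/\ inBox d (@t0 n s) m, minGen (mpow I s.+1) m & mdiv m U].
Proof.
move=> hU hU0.
have [m hm hmU] := @min_exists _ _ _ hU.
case: (classic (exists j, j != ord0 /\ d j <= m j)) => [[j [hj hjm]]|hno].
- exists (V s j); split.
  + move=> i; rewrite t0E /V; have [->|hi] := eqVneq i ord0 => /=.
      by rewrite /d0 mulSn leqnn leq_addl.
    have [->|hij] := eqVneq i j => /=; by rewrite ?mul0n ?mul1n ?leqnn ?leq0n.
  + split; first exact: V_in.
    move=> b' hb' hdiv i; have [e0 ej] := @V_eq _ _ _ hj hb' hdiv.
    move: (hdiv i); rewrite /V; have [->|hi] := eqVneq i ord0 => //=.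
    have [->|hij] := eqVneq i j => //=; lia.
  + move=> i; rewrite /V; have [->|hi] := eqVneq i ord0 => //=.
    have [->|hij] := eqVneq i j => //=; exact: leq_trans hjm (hmU j).
- have hlt : forall j, j != ord0 -> m j < d j.
    move=> j hj; rewrite ltnNge; apply/negP => h; apply: hno; exists j; split => //.
  case: hg => _ /(_ s.+1 isT m hm) [c [hc hbox]].
  have hc0 : forall i, i != ord0 -> c i = 0.
    move=> i hi; have := hbox i; have := hlt i hi; have := d_pos i; nia.
  rewrite (@esum1 _ _ hc0) /= in hc.
  exists m; split => //.
  move=> i; rewrite t0E; have := hbox i; have [->|hi] := eqVneq i ord0 => /=.
    by rewrite hc.
  have := hlt i hi; rewrite ?mul0n ?mul1n => h1 /andP[_ h2]; rewrite ?leq0n /=; exact: ltnW.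
Qed.

Lemma dir1 t b : Ia I d (@t0 n t.+1) b ->
  mcolon (mprod (Ia I d (@t0 n t)) I) (xpow ord0 (d ord0)) b.
Proof.
case=> q [m [hbox hmin hq]] hqb.
rewrite esum_t0 in hmin.
case: hmin => hm hmin.
case: hm => p [c [hp hc hpc]].
have hpc' : mpow I t.+2 (mmul p c) by exists p, c; split => //; exact: mdiv_refl.
have heq : forall i, p i + c i = m i.
  move=> i; exact: (hmin _ hpc' hpc i).
have hc0 : c ord0 <= d ord0.
  rewrite leqNgt; apply/negP => lt.
  have hpe : mpow I t.+2 (mmul p (xpow ord0 (d ord0))).
    exists p, (xpow ord0 (d ord0)); split => //; try exact: I_xpow; exact: mdiv_refl.
  have hd : mdiv (mmul p (xpow ord0 (d ord0))) m.
    move=> i; rewrite /mmul xpowE -heq; case: eqP => [->|_].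
      rewrite leq_add2l; exact: ltnW.
    by rewrite addn0 leq_addr.
  move: (hmin _ hpe hd ord0); rewrite /mmul xpowE eqxx -heq => e; lia.
have hpmin : minGen (mpow I t.+1) p.
  split => // b' hb' hdiv i.
  have hb'c : mpow I t.+2 (mmul b' c) by exists b', c; split => //; exact: mdiv_refl.
  have hd : mdiv (mmul b' c) m by move=> k; rewrite /mmul -heq leq_add2r; exact: hdiv.
  have := hmin _ hb'c hd i; have := heq i; rewrite /mmul; lia.
have hp0 := @pm_bound _ _ hpmin.
have hpbox : inBox d (@t0 n t) p.
  move=> i; rewrite t0E; have := hbox i; have := heq i; rewrite t0E.
  have [->|hi] := eqVneq i ord0 => /= hh.
    move=> /andP[hb1 hb2].
    move: hp0 hb1 hb2; rewrite /d0 !mulSn => hp0 hb1 hb2; apply/andP; split; lia.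
  rewrite ?mul0n ?mul1n => hb2; lia.
exists (fun i => p i - @t0 n t i * d i), c; split => //.
- exists (fun i => p i - @t0 n t i * d i); last exact: mdiv_refl.
  by exists p; split => //; rewrite esum_t0.
- move=> i; rewrite /mmul xpowE; have := hq i; have := hqb i; have := heq i; have := hbox i.
  rewrite !t0E; have [->|hi] := eqVneq i ord0 => /=.
    rewrite !mulSn => /andP[hb1 hb2] hh hq1 hq2; lia.
  rewrite ?mul0n ?mul1n => hb2 hh hq1 hq2; lia.
Qed.

Lemma dir2 t b : mcolon (mprod (Ia I d (@t0 n t)) I) (xpow ord0 (d ord0)) b ->
  Ia I d (@t0 n t.+1) b.
Proof.
case=> u [c [[q [p [hpbox hpmin hq]] hqu] hc hdiv]].
rewrite esum_t0 in hpmin.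
pose U := fun i => b i + @t0 n t.+1 i * d i.
have hU : mpow I t.+2 U.
  exists p, c; split => //; first by case: hpmin.
  move=> i; rewrite /mmul /U; have := hpbox i; have := hq i; have := hqu i; have := hdiv i.
  rewrite /mmul xpowE !t0E; have [->|hi] := eqVneq i ord0 => /=.
    rewrite !mulSn => h1 h2 h3 /andP[h4 h5]; lia.
  rewrite ?mul0n ?mul1n => h1 h2 h3 h4; lia.
have hU0 : t.+1 * d ord0 <= U ord0 by rewrite /U t0E eqxx leq_addl.
have [m [hmbox hmmin hmU]] := @boxC _ _ hU hU0.
exists (fun i => m i - @t0 n t.+1 i * d i).
  by exists m; split => //; rewrite esum_t0.
move=> i; have := hmU i; rewrite /U; lia.
Qed.

End Main.

Theorem mainTheorem11 (n : nat) (I : monset n.+1) (d : 'I_n.+1 -> nat) :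
  good I d ->
  forall t : nat,
    msame (Ia I d (@t0 n t.+1))
          (mcolon (mprod (Ia I d (@t0 n t)) I) (xpow ord0 (d ord0))).
Proof.
move=> hg t b; split; [exact: dir1 | exact: dir2].
Qed.
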